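(* For every DBI normal formula $\varphi$ and every pointed Kripke model $(\mathcal{M},v)$, the pointed update of $(\mathcal{M},v)$ with $(\mathcal{U}_\varphi,0)$ is defined and $\bigl(\mathcal{M}\odot\mathcal{U}_\varphi,(v,0)\bigr)$ is weakly privatized with respect to $\varphi$.
   Context: Agents $\mathcal{A}=\{1,\dots,n\}$, $n>1$; language $\mathcal{L}$: $\varphi ::= p \mid \neg\varphi \mid (\varphi\wedge\varphi)\mid B_i\varphi$, $\top$ the usual tautology. Kripke model $\mathcal{M}=\langle S,R,V\rangle$ (nonempty $S$, $R_i\subseteq S\times S$, $V:\mathit{Prop}\to 2^S$), standard truth. Action model $\mathcal{U}=\langle E,Q,\mathsf{pre}\rangle$ (nonempty $E$, $Q_i\subseteq E\times E$, $\mathsf{pre}:E\to\mathcal{L}$). Frame properties apply to models via their underlying frames. Pointed update of $(\mathcal{M},w)$ with $(\mathcal{U},\alpha)$, defined iff $\mathcal{M},w\vDash\mathsf{pre}(\alpha)$: with $T=\{(x,\beta)\in S\times E\mid\mathcal{M},x\vDash\mathsf{pre}(\beta)\}$, $\mathcal{M}\odot\mathcal{U}=\langle S^{\mathcal U},R^{\mathcal U},V^{\mathcal U}\rangle$ where $S^{\mathcal U}$ is the smallest subset of $T$ containing $(w,\alpha)$ closed under: $(x,\beta)\in S^{\mathcal U}$, $(u,\gamma)\in T$, $xR_iu$, $\beta Q_i\gamma$ imply $(u,\gamma)\in S^{\mathcal U}$; $R^{\mathcal U}_i$ relates $(x,\beta),(u,\gamma)\in S^{\mathcal U}$ iff $xR_iu$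 and $\beta Q_i\gamma$; $V^{\mathcal U}(p)=\{(x,\beta)\in S^{\mathcal U}\mid x\in V(p)\}$. Target agents: $\mathsf{ta}(p)=\varnothing$, $\mathsf{ta}(\neg\phi)=\mathsf{ta}(\phi)$, $\mathsf{ta}(\phi\wedge\psi)=\mathsf{ta}(\phi)\cup\mathsf{ta}(\psi)$, $\mathsf{ta}(B_i\phi)=\{i\}$. DBI formulas: $\varphi ::= B_i\xi \mid B_i(\xi\wedge\varphi)\mid(\varphi\wedge\varphi)\mid B_i\varphi$, $\xi$ purely propositional. DBI normal: $B_i\xi$ always; $B_i\varphi$, $B_i(\xi\wedge\varphi)$ iff $\varphi$ DBI normal and $i\notin\mathsf{ta}(\varphi)$; $\varphi\wedge\psi$ iff both DBI normal and $\mathsf{ta}(\varphi)\cap\mathsf{ta}(\psi)=\varnothing$. Action model $\mathcal{U}_\varphi=\langle E^\varphi,Q^\varphi,\mathsf{pre}^\varphi\rangle$ for DBI normal $\varphi$, recursively; always $E^\varphi=\{0,-1\}\sqcup D^\varphi$, $\varnothing\ne D^\varphi\subseteq\{1,2,\dots\}$, $\mathsf{pre}^\varphi(0)=\mathsf{pre}^\varphi(-1)=\top$; $\underline{Q}_j:=Q_j\cap((E\setminus\{0\})\times(E\setminus\{0\}))$. (1) $\varphi=B_i\xi$: $D=\{m\}$, $\mathsf{pre}(m)=\xi$, $Q_j=\{(0,-1),(m,-1),(-1,-1)\}$ ($j\ne i$), $Q_i=\{(0,m),(m,m),(-1,-1)\}$. (2) $\varphi=B_i\psi$: fresh $m\ge1$,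 $m\notin D^\psi$; $D^\varphi=D^\psi\sqcup\{m\}$; $\mathsf{pre}^\varphi$ extends $\mathsf{pre}^\psi$ with $\mathsf{pre}^\varphi(m)=\top$; $Q^\varphi_j=\underline{Q}^\psi_j\cup\{(0,-1)\}\cup\{(m,k)\mid(0,k)\in Q^\psi_j\}$ ($j\ne i$); $Q^\varphi_i=\underline{Q}^\psi_i\cup\{(0,m),(m,m)\}$. (3) $\varphi=B_i(\xi\wedge\psi)$: as (2) but $\mathsf{pre}^\varphi(m)=\xi$. (4) $\varphi=\psi\wedge\theta$: with $D^\psi\cap D^\theta=\varnothing$, $D^\varphi=D^\psi\sqcup D^\theta$, $\mathsf{pre}^\varphi=\mathsf{pre}^\psi\cup\mathsf{pre}^\theta$, $Q^\varphi_j=\underline{Q}^\psi_j\cup\underline{Q}^\theta_j\cup\{(0,k)\mid(0,k)\in Q^\psi_j\cup Q^\theta_j, k\in D^\psi\sqcup D^\theta\}\cup\{(0,-1)\mid\text{no such }k\text{ exists}\}$. Modal syntactic tree $\mathcal{T}_\varphi$: $\mathcal{T}_{B_i\xi}$ is a root with one child labeled $B_i$; $\mathcal{T}_{B_i\psi}=\mathcal{T}_{B_i(\xi\wedge\psi)}$ is obtained by labeling the root of $\mathcal{T}_\psi$ with $B_i$ and making it the only child of a new unlabeled root; $\mathcal{T}_{\psi\wedge\theta}$ is the disjoint union of $\mathcal{T}_\psi,\mathcal{T}_\theta$ with roots identified. $RootP(\varphi)$: paths from the root (length $\ge0$); $\mathsf{agSeq}(\sigma)$: agents labeling the non-root nodes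 of $\sigma$, in order. Clusters: for a frame $\mathcal{F}=\langle W,R\rangle$, $w\in W$, $C^{i_1,\dots,i_l}_{\mathcal{F},w}=\{u\mid\exists u_2,\dots,u_l:\ wR_{i_1}u_2\cdots u_lR_{i_l}u\}$, $C^\varepsilon_{\mathcal{F},w}=\{w\}$. $\mathcal{A}^l_{\mathrm{nsr}}$: agent sequences of length $l$ without two successive equal agents. $(\mathcal{F},w)$ is weakly privatized w.r.t. $\varphi$ iff for every $\sigma\in RootP(\varphi)$ and every $s\in\bigcup_{l\ge0}\mathcal{A}^l_{\mathrm{nsr}}\setminus\{\mathsf{agSeq}(\sigma)\}$, $C^{\mathsf{agSeq}(\sigma)}_{\mathcal{F},w}\cap C^s_{\mathcal{F},w}=\varnothing$. *)

(* Defs.v *)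
From HB Require Import structures.
From mathcomp Require Import all_boot.
From Stdlib Require Import ZArith.
Set Warnings "-notation-overridden".

Unset Implicit Arguments.
Unset Strict Implicit.
Unset Printing Implicit Defensive.

(* Agents are 'I_n (standing for {1,...,n}); propositional atoms are nat. *)
Inductive form (n : nat) : Type :=
| Atom of nat
| Neg of form n
| And of form n & form n
| Bel of 'I_n & form n.

Arguments Atom {n} _.
Arguments Neg {n} _.
Arguments And {n} _ _.
Arguments Bel {n} _ _.

Section Defs.
Variable n : nat.

Definition top : form n := Neg (And (Atom 0) (Neg (Atom 0))).

Fixpoint propb (f : form n) : bool :=
  match f with
  | Atom _ => true
  | Neg a => propb a
  | And a b => propb a && propb b
  | Bel _ _ => false
  end.

Fixpoint ta (f : form n) : {set 'I_n} :=
  match f with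
  | Atom _ => set0
  | Neg a => ta a
  | And a b => ta a :|: ta b
  | Bel i _ => [set i]
  end.

Inductive DBI : form n -> Prop :=
| DBI_B i xi : propb xi -> DBI (Bel i xi)
| DBI_Bc i xi f : propb xi -> DBI f -> DBI (Bel i (And xi f))
| DBI_and f g : DBI f -> DBI g -> DBI (And f g)
| DBI_Bd i f : DBI f -> DBI (Bel i f).

Inductive DBI_normal : form n -> Prop :=
| N_B i xi : propb xi -> DBI_normal (Bel i xi)
| N_Bc i xi f : propb xi -> DBI_normal f -> i \notin ta f ->
    DBI_normal (Bel i (And xi f))
| N_and f g : DBI_normal f -> DBI_normal g -> [disjoint ta f & ta g] ->
    DBI_normal (And f g)
| N_Bd i f : DBI_normal f -> i \notin ta f -> DBI_normal (Bel i f).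

Record kmodel := KModel {
  St : Type;
  Rel : 'I_n -> St -> St -> Prop;
  Val : nat -> St -> Prop }.

Fixpoint sat (M : kmodel) (w : St M) (f : form n) : Prop :=
  match f with
  | Atom p => @Val M p w
  | Neg a => ~ sat M w a
  | And a b => sat M w a /\ sat M w b
  | Bel i a => forall u, @Rel M i w u -> sat M u a
  end.

Record amodel := AModel {
  aE : Z -> Prop;
  aQ : 'I_n -> Z -> Z -> Prop;
  apre : Z -> form n }.

Definition upd_defined (M : kmodel) (U : amodel) (w : St M) (a : Z) : Prop :=
  aE U a /\ sat M w (apre U a).

Inductive upd_reach (M : kmodel) (U : amodel) (w : St M) (a : Z)
  : St M -> Z -> Prop :=
| ur_base : aE U a -> sat M w (apre U a) -> upd_reach M U w a w a
| ur_step x b u c i :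
    upd_reach M U w a x b -> @Rel M i x u -> aQ U i b c ->
    aE U c -> sat M u (apre U c) -> upd_reach M U w a u c.

Definition upd_model (M : kmodel) (U : amodel) (w : St M) (a : Z) : kmodel :=
  {| St := {p : St M * Z | upd_reach M U w a p.1 p.2};
     Rel := fun i p q => @Rel M i (proj1_sig p).1 (proj1_sig q).1 /\ aQ U i (proj1_sig p).2 (proj1_sig q).2;
     Val := fun x p => @Val M x (proj1_sig p).1 |}.

Definition upd_point (M : kmodel) (U : amodel) (w : St M) (a : Z)
  (H : upd_defined M U w a) : St (upd_model M U w a) :=
  exist _ (w, a) (ur_base M U w a (proj1 H) (proj2 H)).

Definition Umodel (D : Z -> Prop) (Q : 'I_n -> Z -> Z -> Prop) (pre : Z -> form n)
  : amodel := {| aE := fun e => e = 0%Z \/ e = (-1)%Z \/ D e; aQ := Q; apre := pre |}.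

Definition underQ (Q : 'I_n -> Z -> Z -> Prop) (j : 'I_n) (e f : Z) : Prop :=
  Q j e f /\ e <> 0%Z /\ f <> 0%Z.

(* IsU phi D Q pre : <E,Q,pre> with E = {0,-1} + D is a (the, up to the
   choice of fresh labels) action model U_phi built by clauses (1)-(4). *)
Inductive IsU : form n -> (Z -> Prop) -> ('I_n -> Z -> Z -> Prop) ->
                (Z -> form n) -> Prop :=
| U_B (i : 'I_n) xi (m : Z) D Q pre :
    propb xi -> (1 <= m)%Z ->
    (forall e, D e <-> e = m) ->
    pre 0%Z = top -> pre (-1)%Z = top -> pre m = xi ->
    (forall j e f, j != i ->
       (Q j e f <-> (e = 0%Z /\ f = (-1)%Z) \/ (e = m /\ f = (-1)%Z)
                    \/ (e = (-1)%Z /\ f = (-1)%Z))) ->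
    (forall e f, Q i e f <-> (e = 0%Z /\ f = m) \/ (e = m /\ f = m)
                    \/ (e = (-1)%Z /\ f = (-1)%Z)) ->
    IsU (Bel i xi) D Q pre
| U_Bd (i : 'I_n) psi (m : Z) Dp Qp prep D Q pre :
    IsU psi Dp Qp prep -> (1 <= m)%Z -> ~ Dp m ->
    (forall e, D e <-> Dp e \/ e = m) ->
    pre 0%Z = top -> pre (-1)%Z = top -> pre m = top ->
    (forall e, Dp e -> pre e = prep e) ->
    (forall j e f, j != i ->
       (Q j e f <-> underQ Qp j e f \/ (e = 0%Z /\ f = (-1)%Z)
                    \/ (e = m /\ Qp j 0%Z f))) ->
    (forall e f, Q i e f <-> underQ Qp i e f \/ (e = 0%Z /\ f = m)
                    \/ (e = m /\ f = m)) ->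
    IsU (Bel i psi) D Q pre
| U_Bc (i : 'I_n) xi psi (m : Z) Dp Qp prep D Q pre :
    propb xi ->
    IsU psi Dp Qp prep -> (1 <= m)%Z -> ~ Dp m ->
    (forall e, D e <-> Dp e \/ e = m) ->
    pre 0%Z = top -> pre (-1)%Z = top -> pre m = xi ->
    (forall e, Dp e -> pre e = prep e) ->
    (forall j e f, j != i ->
       (Q j e f <-> underQ Qp j e f \/ (e = 0%Z /\ f = (-1)%Z)
                    \/ (e = m /\ Qp j 0%Z f))) ->
    (forall e f, Q i e f <-> underQ Qp i e f \/ (e = 0%Z /\ f = m)
                    \/ (e = m /\ f = m)) ->
    IsU (Bel i (And xi psi)) D Q pre
| U_And psi theta Dp Qp prep Dt Qt pret D Q pre :
    IsU psi Dp Qp prep -> IsU theta Dt Qt pret ->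
    (forall e, ~ (Dp e /\ Dt e)) ->
    (forall e, D e <-> Dp e \/ Dt e) ->
    pre 0%Z = top -> pre (-1)%Z = top ->
    (forall e, Dp e -> pre e = prep e) ->
    (forall e, Dt e -> pre e = pret e) ->
    (forall j e f,
       Q j e f <->
         underQ Qp j e f \/ underQ Qt j e f
         \/ (e = 0%Z /\ (Qp j 0%Z f \/ Qt j 0%Z f) /\ (Dp f \/ Dt f))
         \/ (e = 0%Z /\ f = (-1)%Z /\
             ~ (exists k, (Qp j 0%Z k \/ Qt j 0%Z k) /\ (Dp k \/ Dt k)))) ->
    IsU (And psi theta) D Q pre.

(* agent sequences agSeq(sigma) of the root paths sigma of the modal
   syntactic tree T_phi *)
Inductive rootPath : form n -> seq 'I_n -> Prop :=
| rp_root f : rootPath f [::]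
| rp_Bprop i xi : propb xi -> rootPath (Bel i xi) [:: i]
| rp_Bd i f s : DBI f -> rootPath f s -> rootPath (Bel i f) (i :: s)
| rp_Bc i xi f s : propb xi -> DBI f -> rootPath f s ->
    rootPath (Bel i (And xi f)) (i :: s)
| rp_andl f g s : rootPath f s -> rootPath (And f g) s
| rp_andr f g s : rootPath g s -> rootPath (And f g) s.

Fixpoint cluster (S : Type) (R : 'I_n -> S -> S -> Prop) (w : S)
  (s : seq 'I_n) (u : S) : Prop :=
  match s with
  | [::] => u = w
  | i :: s' => exists u2, R i w u2 /\ cluster S R u2 s' u
  end.

Definition nsr (s : seq 'I_n) : bool := sorted (fun a b : 'I_n => a != b) s.

Definition weakly_privatized (M : kmodel) (w : St M) (f : form n) : Prop :=
  forall sigma s, rootPath f sigma -> nsr s -> s <> sigma ->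
    forall u, ~ (cluster (St M) (@Rel M) w sigma u /\ cluster (St M) (@Rel M) w s u).

End Defs.

Arguments top {n}.
Arguments propb {n}.
Arguments ta {n}.
Arguments DBI {n}.
Arguments DBI_normal {n}.
Arguments St {n}.
Arguments Rel {n}.
Arguments Val {n}.
Arguments sat {n}.
Arguments aE {n}.
Arguments aQ {n}.
Arguments apre {n}.
Arguments upd_defined {n}.
Arguments upd_reach {n}.
Arguments upd_model {n}.
Arguments upd_point {n}.
Arguments Umodel {n}.
Arguments underQ {n}.
Arguments IsU {n}.
Arguments rootPath {n}.
Arguments cluster {n}.
Arguments nsr {n}.
Arguments weakly_privatized {n}.

(* Main.v *)
Require Import Defs.
From HB Require Import structures.
From mathcomp Require Import all_boot.
From Stdlib Require Import ZArith Lia.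
Set Warnings "-notation-overridden".

Local Open Scope Z_scope.

Record Inv {n} (P : seq 'I_n -> Prop) (T : {set 'I_n}) (D : Z -> Prop)
  (Q : 'I_n -> Z -> Z -> Prop) (pre : Z -> form n) : Prop := MkInv {
 i_W : Z -> seq 'I_n -> Prop;
 i_pre : pre 0 = top;
 i_D : forall e, D e -> 1 <= e;
 i_m1 : forall j f, Q j (-1) f <-> f = -1;
 i_src : forall j e f, Q j e f -> e = 0 \/ e = -1 \/ D e;
 i_tgt : forall j e f, Q j e f -> f = -1 \/ D f;
 i_ta : forall j f, Q j 0 f -> D f -> j \in T;
 i_pta : forall j s, P (j :: s) -> j \in T;
 i_Wf : forall e s t, i_W e s -> i_W e t -> s = t;
 i_ex : forall j s, P (j :: s) -> exists k, Q j 0 k /\ D k;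
 i_rp : forall s e, P s -> s <> [::] -> cluster Z Q 0 s e -> D e /\ i_W e s;
 i_ns : forall s e, nsr s -> cluster Z Q 0 s e -> D e -> i_W e s }.

Lemma Inv_mono {n} (P P2 : seq 'I_n -> Prop) T D Q pre :
  Inv P T D Q pre -> (forall s, P2 s -> P s) -> Inv P2 T D Q pre.
Proof.
case=> W a b c d e f g h i j k HP.
apply: (@MkInv _ _ _ _ _ _ W); eauto.
Qed.

Lemma sim {n} (Q Q' : 'I_n -> Z -> Z -> Prop) (S : Z -> Prop) :
  (forall j y g, S y -> Q j y g -> Q' j y g /\ S g) ->
  forall s x g, S x -> cluster Z Q x s g -> cluster Z Q' x s g /\ S g.
Proof.
move=> H; elim=> [|j s IH] x g Sx /=.
- by move=> ->; split.
- case=> u [Qu Cu].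
  have [Q'u Su] := H _ _ _ Sx Qu.
  have [C' Sg] := IH _ _ Su Cu.
  by split=> //; exists u.
Qed.
Arguments sim {n Q Q' S}.

Definition Qtriv {n} (j : 'I_n) (e f : Z) : Prop := (e = 0 \/ e = -1) /\ f = -1.

Lemma triv {n} : Inv (fun s : seq 'I_n => s = [::]) set0 (fun _ => False) Qtriv (fun _ => top).
Proof.
apply: (@MkInv _ _ _ _ _ _ (fun _ _ => False)) => //.
- move=> j f; rewrite /Qtriv; lia.
- move=> j e f; rewrite /Qtriv; lia.
- move=> j e f; rewrite /Qtriv; lia.
Qed.

Lemma Bstep {n} (P : seq 'I_n -> Prop) T Dp Qp prep (i : 'I_n) (m : Z) D Q pre :
  Inv P T Dp Qp prep -> i \notin T -> 1 <= m -> ~ Dp m ->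
  (forall e, D e <-> Dp e \/ e = m) -> pre 0 = top ->
  (forall j e f, j != i -> (Q j e f <-> underQ Qp j e f \/ (e = 0 /\ f = -1) \/ (e = m /\ Qp j 0 f))) ->
  (forall e f, Q i e f <-> underQ Qp i e f \/ (e = 0 /\ f = m) \/ (e = m /\ f = m)) ->
  Inv (fun sg => sg = [::] \/ exists s, sg = i :: s /\ P s) [set i] D Q pre.
Proof.
case=> W Hpre HD Hm1 Hsrc Htgt Hta Hpta HWf Hex Hrp Hns iT m1 Dpm HDe Hpre' HQj HQi.
have Hgen : forall j e f, Q j e f -> underQ Qp j e f \/ (e = 0 /\ (f = -1 \/ f = m))
    \/ (e = m /\ (f = m \/ Qp j 0 f)).
  move=> j e f; case: (eqVneq j i) => [->|ne]; [rewrite HQi | rewrite HQj //]; tauto.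
have Hnm : forall j g, ~ Qp j m g.
  move=> j g /Hsrc [|[|/Dpm//]]; lia.
have Hsim : forall s x g, (x = -1 \/ Dp x) -> cluster Z Q x s g ->
    cluster Z Qp x s g /\ (g = -1 \/ Dp g).
  apply: sim => j y g Sy /Hgen [[Qy _]|[[y0 _]|[ym _]]].
  - by split=> //; apply: Htgt Qy.
  - by case: Sy => [|/HD]; lia.
  - by subst y; case: Sy => [|//]; lia.
have Hstep0 : forall j f, Q j 0 f -> (j = i /\ f = m) \/ (j != i /\ f = -1).
  move=> j f; case: (eqVneq j i) => [->|ne]; [rewrite HQi | rewrite HQj //];
  (case=> [[_ [//]]|[[_ ->]|[]]]; [ by auto | lia]).
have Hstepm : forall j g, j != i -> Q j m g -> Qp j 0 g.
  move=> j g ne; rewrite HQj // => -[[/Hnm//]|[|[]//]]; lia.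
have Hm1' : forall j f, Q j (-1) f <-> f = -1.
  move=> j f; split.
  - by move/Hgen => [[/Hm1//]|]; lia.
  - move=> ->; case: (eqVneq j i) => [->|ne]; [rewrite HQi | rewrite HQj //];
    left; (split; [by apply/Hm1|lia]).
have Hstay : forall s g, cluster Z Q (-1) s g -> g = -1.
  move=> s g C.
  have Hs : forall j y g', (fun x => x = -1) y -> Q j y g' -> Q j y g' /\ (fun x => x = -1) g'.
    by move=> j y g' /= -> Qy; split=> //; apply/(Hm1' j).
  by case: (@sim _ Q Q (fun x => x = -1) Hs s (-1) g erefl C).
apply: (@MkInv _ _ _ _ _ _
   (fun e s => (e = m /\ s = [:: i]) \/ (Dp e /\ exists s', s = i :: s' /\ W e s'))).
- exact: Hpre'.
- by move=> e /HDe [/HD//|->].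
- exact: Hm1'.
- move=> j e f /Hgen [[/Hsrc Hs _]|[[-> _]|[-> _]]].
  + by rewrite !HDe; tauto.
  + by left.
  + by right; right; apply/HDe; right.
- move=> j e f /Hgen [[/Htgt Hs _]|[[_ [->|->]]|[_ [->|/Htgt]]]].
  + by rewrite !HDe; tauto.
  + by left.
  + by right; apply/HDe; right.
  + by right; apply/HDe; right.
  + by rewrite !HDe; tauto.
- move=> j f /Hstep0 [[-> _]|[_ ->]]; first by rewrite in_set1.
  by move/HDe => [/HD|]; lia.
- by move=> j s [//|[s0 [[-> _] _]]]; rewrite in_set1.
- move=> e s t [[Em1 ->]|[De [s' [-> Ws]]]] [[Em ->]|[De' [t' [-> Wt]]]] //.
  + by subst e; case: (Dpm De').
  + by subst e; case: (Dpm De).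
  + by rewrite (HWf _ _ _ Ws Wt).
- move=> j s [//|[s0 [[-> _] _]]]; exists m; split.
  + by apply/HQi; right; left.
  + by apply/HDe; right.
- move=> sg e [->//|[s0 [-> Ps0]]] _ /= [u [/Hstep0 [[_ ->]|[]]]]; last by rewrite eqxx.
  case: s0 Ps0 => [|j s1] Ps0 /=.
  + by move=> ->; split; [apply/HDe; right | left].
  + case=> u2 [Qu2 C].
    have ji : j != i by apply/eqP => E; move: iT; rewrite -E (Hpta _ _ Ps0).
    have Q0 := Hstepm _ _ ji Qu2.
    have [C' _] := Hsim _ _ _ (Htgt _ _ _ Q0) C.
    have [De We] := Hrp (j :: s1) e Ps0 ltac:(done) ltac:(by exists u2).
    split; first by apply/HDe; left.
    by right; split=> //; exists (j :: s1).
- move=> s e; case: s => [|j s1] Hs /=.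
    by move=> -> /HDe [/HD|]; lia.
  case=> u [/Hstep0 [[Ej ->]|[_ ->]] C]; last first.
    by rewrite (Hstay _ _ C) => /HDe [/HD|]; lia.
  subst j.
  case: s1 Hs C => [|k s2] Hs /=.
    by move=> -> _; left.
  case=> u2 [Qu2 C] De.
  move: Hs; rewrite /nsr /= => /andP [ik Hs].
  have ki : k != i by rewrite eq_sym.
  have Q0 := Hstepm _ _ ki Qu2.
  have [C' [e1|Dpe]] := Hsim _ _ _ (Htgt _ _ _ Q0) C.
    by move: De; rewrite e1 => /HDe [/HD|]; lia.
  right; split=> //; exists (k :: s2); split=> //.
  by apply: Hns => //; exists u2.
Qed.

Lemma simcond {n} (Q Qa Qb : 'I_n -> Z -> Z -> Prop) (Da Db : Z -> Prop) :
 (forall j y g, y <> 0 -> Q j y g -> underQ Qa j y g \/ underQ Qb j y g) ->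
 (forall e, Da e -> 1 <= e) -> (forall e, Db e -> 1 <= e) -> (forall e, ~ (Da e /\ Db e)) ->
 (forall j f, Qa j (-1) f <-> f = -1) -> (forall j f, Qb j (-1) f <-> f = -1) ->
 (forall j e f, Qa j e f -> f = -1 \/ Da f) -> (forall j e f, Qb j e f -> e = 0 \/ e = -1 \/ Db e) ->
 forall j y g, (y = -1 \/ Da y) -> Q j y g -> Qa j y g /\ (g = -1 \/ Da g).
Proof.
move=> HQ HDa HDb Hdis Ha1 Hb1 Hta Hsb j y g Sy Qy.
have y0 : y <> 0 by case: Sy => [|/HDa]; lia.
case: (HQ _ _ _ y0 Qy) => [[Qay _]|[Qby _]].
  by split=> //; apply: Hta Qay.
case: (Hsb _ _ _ Qby) => [//|[ym|Dby]].
  subst y; move/Hb1: Qby => ->; split; [by apply/Ha1 | by left].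
case: Sy => [ym|Day]; first by move: (HDb _ Dby); lia.
by case: (Hdis y).
Qed.
Arguments simcond {n Q Qa Qb Da Db}.

Lemma Andstep {n} (Pp : seq 'I_n -> Prop) Tp Dp Qp prep Pt Tt Dt Qt pret D Q pre :
 Inv Pp Tp Dp Qp prep -> Inv Pt Tt Dt Qt pret -> [disjoint Tp & Tt] ->
 (forall e, ~ (Dp e /\ Dt e)) -> (forall e, D e <-> Dp e \/ Dt e) -> pre 0 = top ->
 (forall j e f, Q j e f <-> underQ Qp j e f \/ underQ Qt j e f
     \/ (e = 0 /\ (Qp j 0 f \/ Qt j 0 f) /\ (Dp f \/ Dt f))
     \/ (e = 0 /\ f = -1 /\ ~ (exists k, (Qp j 0 k \/ Qt j 0 k) /\ (Dp k \/ Dt k)))) ->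
 Inv (fun s => Pp s \/ Pt s) (Tp :|: Tt) D Q pre.
Proof.
case=> Wp Hprep HDp Hm1p Hsrcp Htgtp Htap Hptap HWfp Hexp Hrpp Hnsp.
case=> Wt Hpret HDt Hm1t Hsrct Htgtt Htat Hptat HWft Hext Hrpt Hnst.
move=> Hdis Hdisj HDe Hpre HQ.
have Hdisj' : forall e, ~ (Dt e /\ Dp e) by move=> e [a b]; apply: (Hdisj e).
have Hnz1 : forall j y g, y <> 0 -> Q j y g -> underQ Qp j y g \/ underQ Qt j y g.
  by move=> j y g y0 /HQ; tauto.
have Hnz2 : forall j y g, y <> 0 -> Q j y g -> underQ Qt j y g \/ underQ Qp j y g.
  by move=> j y g y0 /HQ; tauto.
have Sp := simcond Hnz1 HDp HDt Hdisj Hm1p Hm1t Htgtp Hsrct.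
have St := simcond Hnz2 HDt HDp Hdisj' Hm1t Hm1p Htgtt Hsrcp.
have Hm1 : forall j f, Q j (-1) f <-> f = -1.
  move=> j f; split.
  - by move/HQ => [[/Hm1p//]|[[/Hm1t//]|]]; lia.
  - by move=> ->; apply/HQ; left; split; [apply/Hm1p | lia].
have Hstay : forall s g, cluster Z Q (-1) s g -> g = -1.
  move=> s g C.
  have Hs : forall j y g', (fun x => x = -1) y -> Q j y g' -> Q j y g' /\ (fun x => x = -1) g'.
    by move=> j y g' /= -> Qy; split=> //; apply/(Hm1 j).
  by case: (@sim _ Q Q (fun x => x = -1) Hs s (-1) g erefl C).
have Hfp : forall j f, Qp j 0 f -> (Dp f \/ Dt f) -> Dp f.
  move=> j f /Htgtp [->|//] [/HDp|/HDt]; lia.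
have Hft : forall j f, Qt j 0 f -> (Dp f \/ Dt f) -> Dt f.
  move=> j f /Htgtt [->|//] [/HDp|/HDt]; lia.
have Dec : forall j s e, cluster Z Q 0 (j :: s) e ->
   (e = -1 /\ ~ (exists k, (Qp j 0 k \/ Qt j 0 k) /\ (Dp k \/ Dt k)))
   \/ (j \in Tp /\ cluster Z Qp 0 (j :: s) e /\ (e = -1 \/ Dp e))
   \/ (j \in Tt /\ cluster Z Qt 0 (j :: s) e /\ (e = -1 \/ Dt e)).
  move=> j s e /= [f [/HQ Qf C]].
  case: Qf => [[_ [//]]|[[_ [//]]|[[_ [Qf Df]]|[_ [Ef Nk]]]]].
  - case: Qf => Qf.
    + have Dpf := Hfp _ _ Qf Df.
      have [C' Se] := sim Sp s f e (or_intror Dpf) C.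
      by right; left; split; [apply: Htap Qf Dpf | split=> //; exists f].
    + have Dtf := Hft _ _ Qf Df.
      have [C' Se] := sim St s f e (or_intror Dtf) C.
      by right; right; split; [apply: Htat Qf Dtf | split=> //; exists f].
  - by left; split=> //; subst f; apply: Hstay C.
have HD : forall e, D e -> 1 <= e by move=> e /HDe [/HDp|/HDt].
apply: (@MkInv _ _ _ _ _ _
   (fun e s => (Dp e /\ Wp e s) \/ (Dt e /\ Wt e s))).
- exact: Hpre.
- exact: HD.
- exact: Hm1.
- move=> j e f /HQ [[/Hsrcp Hs _]|[[/Hsrct Hs _]|[[-> _]|[-> _]]]]; rewrite ?HDe; tauto.
- move=> j e f /HQ [[/Htgtp Hs _]|[[/Htgtt Hs _]|[[_ [_ Df]]|[_ [-> _]]]]]; rewrite ?HDe; tauto.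
- move=> j f /HQ [[_ [//]]|[[_ [//]]|[[_ [[Qf|Qf] Df]]|[_ [-> _]]]]] Df'.
  + by rewrite inE (Htap _ _ Qf (Hfp _ _ Qf Df)).
  + by rewrite inE (Htat _ _ Qf (Hft _ _ Qf Df)) orbT.
  + by move: (HD _ Df'); lia.
- by move=> j s [/Hptap|/Hptat] H; rewrite inE H ?orbT.
- move=> e s t [[De Ws]|[De Ws]] [[De' Wt']|[De' Wt']].
  + exact: HWfp Ws Wt'.
  + by case: (Hdisj e).
  + by case: (Hdisj e).
  + exact: HWft Ws Wt'.
- move=> j s [/Hexp|/Hext] [k [Qk Dk]]; exists k; (split; [apply/HQ; right; right; left | apply/HDe]); tauto.
- move=> s e; case: s => [|j s] [Ps|Ps] _ // /Dec.
  + move=> [[_ []]|[[jT [C _]]|[jT _]]].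
    * have [k [Qk Dk]] := Hexp _ _ Ps; exists k; tauto.
    * have [De We] := Hrpp _ _ Ps ltac:(done) C.
      by split; [apply/HDe; left | left].
    * by move: (disjointFr Hdis (Hptap _ _ Ps)); rewrite jT.
  + move=> [[_ []]|[[jT _]|[jT [C _]]]].
    * have [k [Qk Dk]] := Hext _ _ Ps; exists k; tauto.
    * by move: (disjointFr Hdis jT); rewrite (Hptat _ _ Ps).
    * have [De We] := Hrpt _ _ Ps ltac:(done) C.
      by split; [apply/HDe; right | right].
- move=> s e; case: s => [|j s] Hs /=.
    by move=> -> /HD; lia.
  move=> C De; case: (Dec _ _ _ C) => [[E _]|[[_ [C' [E|Dpe]]]|[_ [C' [E|Dte]]]]].
  + by move: (HD _ De); rewrite E; lia.
  + by move: (HD _ De); rewrite E; lia.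
  + by left; split=> //; apply: Hnsp.
  + by move: (HD _ De); rewrite E; lia.
  + by right; split=> //; apply: Hnst.
Qed.

Fixpoint good {n} (f : form n) : Prop :=
  match f with
  | Bel _ _ => True
  | And a b => good a /\ good b
  | _ => False
  end.

Lemma IsU_good {n} (phi : form n) D Q pre : IsU phi D Q pre -> good phi.
Proof. by elim=> //= *; split. Qed.
Arguments IsU_good {n phi D Q pre}.

Lemma good_prop {n} (f : form n) : good f -> propb f = false.
Proof. by elim: f => //= a IHa b IHb [/IHa -> _]. Qed.

Lemma DBI_prop {n} (f : form n) : DBI f -> propb f = false.
Proof. by elim=> //= a b _ -> . Qed.

Lemma DBIn_prop {n} (f : form n) : DBI_normal f -> propb f = false.
Proof. by elim=> //= a b _ -> . Qed.

Arguments DBI_prop {n f}.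
Arguments good_prop {n f}.
Arguments DBIn_prop {n f}.

Lemma rp_B_char {n} (i : 'I_n) xi sg : propb xi -> rootPath (Bel i xi) sg ->
  sg = [::] \/ exists s, sg = i :: s /\ s = [::].
Proof.
move=> px H; inversion H; subst.
all: try by left.
all: try by right; exists [::].
all: match goal with h : DBI ?f |- _ => move: px => /=; rewrite (DBI_prop h) ?andbF end.
all: done.
Qed.

Lemma rp_Bd_char {n} (i : 'I_n) psi sg : good psi -> rootPath (Bel i psi) sg ->
  sg = [::] \/ exists s, sg = i :: s /\ rootPath psi s.
Proof.
move=> g H; inversion H; subst.
all: try by left.
all: try by right; eexists; split; [reflexivity|assumption].
all: try by match goal with h : is_true (propb _) |- _ => move: h; rewrite good_prop end.
all: match goal with h : is_true (propb ?x) |- _ => by case: g => /good_prop; rewrite h end.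
Qed.

Lemma rp_Bc_char {n} (i : 'I_n) xi psi sg : good psi -> propb xi ->
  rootPath (Bel i (And xi psi)) sg ->
  sg = [::] \/ exists s, sg = i :: s /\ rootPath psi s.
Proof.
move=> g px H; inversion H; subst.
all: try by left.
all: try by right; eexists; split; [reflexivity|assumption].
all: try by match goal with h : is_true (propb (And _ _)) |- _ =>
  move: h => /= /andP [_]; rewrite good_prop end.
all: match goal with h : DBI (And _ _) |- _ => inversion h; subst end.
all: match goal with h : DBI ?a, p : is_true (propb ?a) |- _ => by rewrite (DBI_prop h) in p end.
Qed.

Lemma rp_And_char {n} (f g : form n) sg : rootPath (And f g) sg ->
  rootPath f sg \/ rootPath g sg.
Proof.
move=> H; inversion H; subst.
- by left; constructor.
- by left.
- by right.
Qed.

Lemma main {n} (phi : form n) D Q pre :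
  IsU phi D Q pre -> DBI_normal phi -> Inv (rootPath phi) (ta phi) D Q pre.
Proof.
elim=> {phi D Q pre}.
- move=> i xi m D Q pre pxi m1 HD Hp0 Hpm1 Hpm HQj HQi _.
  apply: (@Inv_mono _ (fun sg => sg = [::] \/ exists s, sg = i :: s /\ s = [::]));
    last by move=> s; apply: rp_B_char.
  change (ta (Bel i xi)) with [set i].
  refine (@Bstep _ _ _ _ _ _ i m D Q pre triv _ _ _ _ _ _ _).
  all: try done.
  + by rewrite in_set0.
  + by move=> e; rewrite HD; tauto.
  + by move=> j e f ne; rewrite HQj // /underQ /Qtriv; lia.
  + by move=> e f; rewrite HQi // /underQ /Qtriv; lia.
- move=> i psi m Dp Qp prep D Q pre HU IH m1 Dpm HD Hp0 Hpm1 Hpm Hpre HQj HQi Hn.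
  have [Hnp iT] : DBI_normal psi /\ i \notin ta psi.
    have g := IsU_good HU.
    inversion Hn; subst => //.
    all: try by split.
    all: try by match goal with h : is_true (propb ?x), g : good ?x |- _ => by rewrite (good_prop g) in h end.
    all: try match goal with h : is_true (propb ?x), g : good (And ?x _) |- _ => by case: g => /good_prop; rewrite h end.
  apply: (@Inv_mono _ (fun sg => sg = [::] \/ exists s, sg = i :: s /\ rootPath psi s));
    last by move=> s; apply: rp_Bd_char (IsU_good HU).
  change (ta (Bel i psi)) with [set i].
  exact: (@Bstep _ _ _ _ _ _ i m D Q pre (IH Hnp) iT m1 Dpm HD Hp0 HQj HQi).
- move=> i xi psi m Dp Qp prep D Q pre pxi HU IH m1 Dpm HD Hp0 Hpm1 Hpm Hpre HQj HQi Hn.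
  have g := IsU_good HU.
  have [Hnp iT] : DBI_normal psi /\ i \notin ta psi.
    inversion Hn; subst => //.
    all: try by split.
    all: try by match goal with h : is_true (propb (And _ _)) |- _ =>
      by move: h => /= /andP [_]; rewrite (good_prop g) end.
    all: try match goal with h : DBI_normal (And _ _) |- _ => inversion h; subst end.
    all: try match goal with h : DBI_normal ?a, p : is_true (propb ?a) |- _ =>
      by rewrite (DBIn_prop h) in p end.
  apply: (@Inv_mono _ (fun sg => sg = [::] \/ exists s, sg = i :: s /\ rootPath psi s));
    last by move=> s; apply: rp_Bc_char.
  change (ta (Bel i (And xi psi))) with [set i].
  exact: (@Bstep _ _ _ _ _ _ i m D Q pre (IH Hnp) iT m1 Dpm HD Hp0 HQj HQi).
- move=> psi theta Dp Qp prep Dt Qt pret D Q pre HUp IHp HUt IHt Hdisj HD Hp0 Hpm1 Hpp Hpt HQ Hn.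
  inversion Hn; subst.
  apply: (@Inv_mono _ (fun s => rootPath psi s \/ rootPath theta s));
    last by move=> s; apply: rp_And_char.
  exact: (@Andstep _ _ _ _ _ _ _ _ _ _ _ _ _ _ (IHp H1) (IHt H2) H3 Hdisj HD Hp0 HQ).
Qed.

Lemma clus_upd {n} (M : kmodel n) (U : amodel n) w a s :
  forall (x y : St (upd_model M U w a)),
  cluster (St (upd_model M U w a)) (Rel (upd_model M U w a)) x s y ->
  cluster Z (aQ U) (proj1_sig x).2 s (proj1_sig y).2.
Proof.
elim: s => [|j s IH] x y /=; first by move=> ->.
case=> u [[_ Hq] C]; exists (proj1_sig u).2; split=> //.
exact: IH.
Qed.
Arguments clus_upd {n M U w a s x y}.

Lemma clus_last {n} (Q : 'I_n -> Z -> Z -> Prop) j s : forall x g,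
  cluster Z Q x (j :: s) g -> exists j' e', Q j' e' g.
Proof.
elim: s j => [|k s IH] j x g /= [u [Qu C]].
- by move: C => /= ->; exists j, x.
- exact: (IH k u g C).
Qed.
Arguments clus_last {n Q j s x g}.

Local Close Scope Z_scope.

Theorem theorem10 (n : nat) (hn : 1 < n) (phi : form n)
  (D : Z -> Prop) (Q : 'I_n -> Z -> Z -> Prop) (pre : Z -> form n)
  (M : kmodel n) (v : St M) :
  DBI_normal phi -> IsU phi D Q pre ->
  exists H : upd_defined M (Umodel D Q pre) v 0%Z,
    weakly_privatized (upd_model M (Umodel D Q pre) v 0%Z) (upd_point M (Umodel D Q pre) v 0%Z H) phi.
Proof.
move=> Hn HU.
case: (main _ _ _ _ HU Hn) => W Hpre HD Hm1 Hsrc Htgt Hta Hpta HWf Hex Hrp Hns.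
have H : upd_defined M (Umodel D Q pre) v 0%Z.
  split; first by left.
  rewrite /= Hpre /top /=; tauto.
exists H => sigma s Hsig Hs Hne u [C1 C2].
move: (clus_upd C1) (clus_upd C2) => /= {C1 C2}.
set e := (proj1_sig u).2 => C1 C2.
have nz : forall t, t <> [::] -> cluster Z Q 0%Z t e -> e <> 0%Z.
  case=> [//|j t] _ /clus_last [j' [e' /Htgt [->|/HD]]]; lia.
case: sigma Hsig Hne C1 => [|j sg] Hsig Hne C1.
  case: s Hs Hne C2 => [//|k s] Hs _ C2.
  by apply: (nz _ _ C2); rewrite /= in C1.
have [De We] := Hrp _ _ Hsig ltac:(done) C1.
have Ws := Hns _ _ Hs C2 De.
by apply: Hne; apply: HWf Ws We.
Qed.
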